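(* Let $M$ be an $n$-counter Minsky machine and $k_1,\dots,k_n$ non-negative integers. If the sequent $$l_1\otimes r_1^{k_1}\otimes\cdots\otimes r_n^{k_n},\ !\Phi_M,\ !\mathcal{K}\ \vdash\ l_0$$ is derivable in (propositional) linear logic, then $M$ can go from the initial configuration $(L_1,k_1,\dots,k_n)$ to the halting configuration $(L_0,0,\dots,0)$.
   Context: An $n$-counter Minsky machine $M$ has counters $x_1,\dots,x_n$ with non-negative integer values and a finite list of instructions labelled by labels $L_0,L_1,\dots$, each of one of the forms: (1) $L_i: x_m:=x_m+1$; goto $L_j$; (2) $L_i: x_m:=x_m-1$; goto $L_j$; (3) $L_i$: if $x_m>0$ then goto $L_j$; (4) $L_i$: if $x_m=0$ then goto $L_j$; (5) $L_0$: halt; where $i\ge1$. A configuration is $(L,c_1,\dots,c_n)$; a computation is a finite sequence of configurations each obtained from the previous by applying an instruction of $M$ (an instruction at $L_i$ applies only in a configuration with label $L_i$; type (2) requires $x_m\ge1$, type (3) requires $x_m>0$, type (4) requires $x_m=0$). Encoding: distinct propositional literals $r_1,\dots,r_n$, $l_0,l_1,\dots$ (one per label), $\kappa_1,\dots,\kappa_n$; $r^k$ is the tensor of $k$ copies of $r$ (omitted when $k=0$). For an instruction $I$ of type (1)–(4): $\varphi_{(1)}=l_i\multimap(l_j\otimes r_m)$, $\varphi_{(2)}=(l_i\otimes r_m)\multimap l_j$, $\varphi_{(3)}=(l_i\otimes r_m)\multimap(l_j\otimes r_m)$, $\varphi_{(4)}=l_i\multimap(l_j\oplus\kappa_m)$.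 $\Phi_M$ is the multiset of $\varphi_I$ over the instructions of $M$ of types (1)–(4). $\mathcal{K}=\bigcup_{m=1}^n\mathcal{K}_m$, where $\mathcal{K}_m$ consists of $\kappa_m\multimap l_0$ and $(\kappa_m\otimes r_i)\multimap\kappa_m$ for every $i\ne m$. $!\Phi$ denotes $\{!A: A\in\Phi\}$. *)

(* Defs.v *)
From Stdlib Require Import List Permutation Relations.
Import ListNotations.

Inductive atom : Type :=
| At_r (m : nat)
| At_l (j : nat)
| At_kappa (m : nat).

Inductive formula : Type :=
| Pos (a : atom)
| Neg (a : atom)
| One | Bot | Top | Zero
| Tensor (A B : formula)
| Par (A B : formula)
| With (A B : formula)
| Plus (A B : formula)
| OfCourse (A : formula)
| WhyNot (A : formula).

Fixpoint dual (A : formula) : formula :=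
  match A with
  | Pos a => Neg a
  | Neg a => Pos a
  | One => Bot
  | Bot => One
  | Top => Zero
  | Zero => Top
  | Tensor A B => Par (dual A) (dual B)
  | Par A B => Tensor (dual A) (dual B)
  | With A B => Plus (dual A) (dual B)
  | Plus A B => With (dual A) (dual B)
  | OfCourse A => WhyNot (dual A)
  | WhyNot A => OfCourse (dual A)
  end.

Definition lolli (A B : formula) : formula := Par (dual A) B.

Inductive ll : list formula -> Prop :=
| ll_ax : forall a, ll [Pos a; Neg a]
| ll_ex : forall G D, Permutation G D -> ll G -> ll D
| ll_cut : forall A G D, ll (A :: G) -> ll (dual A :: D) -> ll (G ++ D)
| ll_one : ll [One]
| ll_bot : forall G, ll G -> ll (Bot :: G)
| ll_top : forall G, ll (Top :: G)
| ll_tensor : forall A B G D, ll (A :: G) -> ll (B :: D) -> ll (Tensor A B :: G ++ D)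
| ll_par : forall A B G, ll (A :: B :: G) -> ll (Par A B :: G)
| ll_with : forall A B G, ll (A :: G) -> ll (B :: G) -> ll (With A B :: G)
| ll_plus1 : forall A B G, ll (A :: G) -> ll (Plus A B :: G)
| ll_plus2 : forall A B G, ll (B :: G) -> ll (Plus A B :: G)
| ll_oc : forall A G, ll (A :: map WhyNot G) -> ll (OfCourse A :: map WhyNot G)
| ll_de : forall A G, ll (A :: G) -> ll (WhyNot A :: G)
| ll_wk : forall A G, ll G -> ll (WhyNot A :: G)
| ll_co : forall A G, ll (WhyNot A :: WhyNot A :: G) -> ll (WhyNot A :: G).

Definition ll_sequent (Gamma Delta : list formula) : Prop :=
  ll (map dual Gamma ++ Delta).

Inductive instr : Type :=
| I_inc (i m j : nat)
| I_dec (i m j : nat)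
| I_jpos (i m j : nat)
| I_jzero (i m j : nat).
(* (5) "L_0: halt" is implicit: no instruction has label L_0. *)

Definition instr_wf (n : nat) (I : instr) : Prop :=
  match I with
  | I_inc i m _ | I_dec i m _ | I_jpos i m _ | I_jzero i m _ =>
      1 <= i /\ 1 <= m <= n
  end.

Definition machine_wf (n : nat) (M : list instr) : Prop :=
  Forall (instr_wf n) M.

(* configurations (L_i, c_1, ..., c_n): label index and list of counter
   values; counter x_m is the (m-1)-th entry. *)
Definition config : Type := (nat * list nat)%type.

Definition ctr (cs : list nat) (m : nat) : nat := nth (m - 1) cs 0.

Fixpoint upd (cs : list nat) (p : nat) (f : nat -> nat) : list nat :=
  match cs, p with
  | [], _ => []
  | c :: cs', 0 => f c :: cs'
  | c :: cs', S p' => c :: upd cs' p' f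
  end.

Inductive step (M : list instr) : config -> config -> Prop :=
| st_inc : forall i m j cs, In (I_inc i m j) M ->
    step M (i, cs) (j, upd cs (m - 1) S)
| st_dec : forall i m j cs, In (I_dec i m j) M -> 1 <= ctr cs m ->
    step M (i, cs) (j, upd cs (m - 1) pred)
| st_jpos : forall i m j cs, In (I_jpos i m j) M -> 0 < ctr cs m ->
    step M (i, cs) (j, cs)
| st_jzero : forall i m j cs, In (I_jzero i m j) M -> ctr cs m = 0 ->
    step M (i, cs) (j, cs).

Definition computes (M : list instr) (c c' : config) : Prop :=
  clos_refl_trans config (step M) c c'.

Definition r (m : nat) : formula := Pos (At_r m).
Definition l (j : nat) : formula := Pos (At_l j).
Definition kappa (m : nat) : formula := Pos (At_kappa m).

Definition phi (I : instr) : formula :=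
  match I with
  | I_inc i m j => lolli (l i) (Tensor (l j) (r m))
  | I_dec i m j => lolli (Tensor (l i) (r m)) (l j)
  | I_jpos i m j => lolli (Tensor (l i) (r m)) (Tensor (l j) (r m))
  | I_jzero i m j => lolli (l i) (Plus (l j) (kappa m))
  end.

Definition Phi (M : list instr) : list formula := map phi M.

Definition K_m (n m : nat) : list formula :=
  lolli (kappa m) (l 0) ::
  map (fun i => lolli (Tensor (kappa m) (r i)) (kappa m))
      (filter (fun i => negb (Nat.eqb i m)) (seq 1 n)).

Definition K (n : nat) : list formula :=
  flat_map (K_m n) (seq 1 n).

Definition initial_formula (ks : list nat) : formula :=
  fold_left Tensor
    (flat_map (fun mk => repeat (r (fst mk)) (snd mk))
              (combine (seq 1 (length ks)) ks))
    (l 1).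

(* Main.v *)
Require Import Defs.
From Stdlib Require Import List Permutation Relations Lia PeanoNat FunctionalExtensionality PropExtensionality.
Import ListNotations.

Definition pset := list atom -> Prop.
Definition orth (bot : pset) (X : pset) : pset := fun y => forall x, X x -> bot (x ++ y).
Definition prd (X Y : pset) : pset := fun z => exists x y, X x /\ Y y /\ z = x ++ y.
Definition uni (X Y : pset) : pset := fun z => X z \/ Y z.
Definition epsP (P : Prop) : pset := fun z => z = [] /\ P.
Definition pinv (bot : pset) := forall u v, Permutation u v -> bot u -> bot v.

Fixpoint I (bot : pset) (A : formula) : pset :=
  match A with
  | Pos a => orth bot (orth bot (fun x => x = [a]))
  | Neg a => orth bot (fun x => x = [a])
  | One => orth bot (orth bot (fun x => x = []))
  | Bot => orth bot (fun x => x = [])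
  | Top => orth bot (fun _ => False)
  | Zero => orth bot (orth bot (fun _ => False))
  | Tensor A B => orth bot (orth bot (prd (I bot A) (I bot B)))
  | Par A B => orth bot (prd (orth bot (I bot A)) (orth bot (I bot B)))
  | With A B => orth bot (uni (orth bot (I bot A)) (orth bot (I bot B)))
  | Plus A B => orth bot (orth bot (uni (I bot A) (I bot B)))
  | OfCourse A => orth bot (orth bot (fun x => x = [] /\ I bot A x))
  | WhyNot A => orth bot (fun x => x = [] /\ orth bot (I bot A) x)
  end.

Lemma sub_biorth bot (Hb : pinv bot) (X : pset) x : X x -> orth bot (orth bot X) x.
Proof. intros Hx y Hy. apply (Hb (x ++ y)); [apply Permutation_app_comm | apply Hy; auto]. Qed.

Lemma bio_mono bot (X Y : pset) z : (forall x, X x -> Y x) -> orth bot (orth bot X) z -> orth bot (orth bot Y) z.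
Proof. intros H Hz y Hy. apply Hz. intros x Hx. apply Hy, H, Hx. Qed.

Lemma triple bot (Hb : pinv bot) X : orth bot (orth bot (orth bot X)) = orth bot X.
Proof.
  apply functional_extensionality; intro y; apply propositional_extensionality; split.
  - intros H x Hx. apply H. apply sub_biorth; auto.
  - intros H z Hz. apply (Hb (y ++ z)); [apply Permutation_app_comm|]. apply Hz, H.
Qed.

Lemma I_fact bot (Hb : pinv bot) A : orth bot (orth bot (I bot A)) = I bot A.
Proof. destruct A; simpl; apply triple; auto. Qed.

Lemma dual_I bot (Hb : pinv bot) A : I bot (dual A) = orth bot (I bot A).
Proof.
  induction A; simpl; try rewrite IHA1; try rewrite IHA2; try rewrite IHA;
   repeat rewrite (I_fact bot Hb); try rewrite triple; auto.
Qed.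

Fixpoint C (bot : pset) (G : list formula) : pset :=
  match G with
  | [] => fun c => c = []
  | A :: G => prd (orth bot (I bot A)) (C bot G)
  end.

Definition valid bot G := forall c, C bot G c -> bot c.

Lemma I_orth bot (Hb : pinv bot) A g z : I bot A g -> orth bot (I bot A) z -> bot (z ++ g).
Proof. intros H Hz. rewrite <- (I_fact bot Hb A) in H. apply H, Hz. Qed.

Lemma valid_cons bot (Hb : pinv bot) A G : valid bot (A :: G) <-> forall g, C bot G g -> I bot A g.
Proof.
  split.
  - intros H g Hg. rewrite <- (I_fact bot Hb A). intros z Hz. apply H. exists z, g. auto.
  - intros H c (x & g & Hx & Hg & ->). apply (Hb (g ++ x)); [apply Permutation_app_comm|].
    apply Hx, H, Hg.
Qed.

Lemma C_app bot G D c : C bot (G ++ D) c -> exists g d, C bot G g /\ C bot D d /\ c = g ++ d.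
Proof.
  revert c; induction G as [|A G IH]; intros c H; simpl in *.
  - exists [], c; auto.
  - destruct H as (x & y & Hx & Hy & ->). destruct (IH _ Hy) as (g & d & Hg & Hd & ->).
    exists (x ++ g), d. split; [exists x, g; auto|]. split; auto. apply app_assoc.
Qed.

Lemma C_perm bot G D : Permutation G D -> forall c, C bot D c -> exists c', C bot G c' /\ Permutation c' c.
Proof.
  induction 1; intros c Hc; simpl in *.
  - exists c; auto.
  - destruct Hc as (a & c0 & Ha & H0 & ->). destruct (IHPermutation _ H0) as (c1 & H1 & Hp).
    exists (a ++ c1). split; [exists a, c1; auto|]. apply Permutation_app_head; auto.
  - destruct Hc as (a & c0 & Ha & (b & c1 & Hb & H1 & ->) & ->).
    exists (b ++ a ++ c1). split; [exists b, (a ++ c1); split; auto; split; auto; exists a, c1; auto|].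
    apply Permutation_app_swap_app.
  - destruct (IHPermutation2 _ Hc) as (c1 & H1 & P1). destruct (IHPermutation1 _ H1) as (c2 & H2 & P2).
    exists c2; split; auto. eapply perm_trans; eauto.
Qed.

Lemma eps_prod bot (Hb : pinv bot) P Q x y :
  orth bot (orth bot (epsP P)) x -> orth bot (orth bot (epsP Q)) y ->
  orth bot (orth bot (epsP (P /\ Q))) (x ++ y).
Proof.
  intros Hx Hy z Hz. rewrite app_assoc. apply Hy. intros w [-> HQ]. simpl.
  apply Hx. intros w' [-> HP]. simpl. apply (Hz []). split; auto.
Qed.

Lemma oc_ctx bot (Hb : pinv bot) G c : C bot (map WhyNot G) c ->
  orth bot (orth bot (epsP (C bot (map WhyNot G) []))) c.
Proof.
  revert c; induction G as [|B G IH]; intros c Hc; simpl in *.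
  - subst. apply sub_biorth; auto. split; auto.
  - destruct Hc as (x & c0 & Hx & H0 & ->).
    assert (Hx' : orth bot (orth bot (epsP (orth bot (I bot B) []))) x).
    { apply (bio_mono bot (fun x => x = [] /\ orth bot (I bot B) x)).
      - intros u [-> Hu]. split; auto.
      - exact Hx. }
    generalize (eps_prod bot Hb _ _ _ _ Hx' (IH _ H0)). apply bio_mono.
    intros u [-> [H1 H2]]. split; auto. exists [], []. split; [|split; auto].
    apply sub_biorth; auto.
Qed.

Theorem soundness bot (Hb : pinv bot) G : ll G -> valid bot G.
Proof.
  induction 1.
  - apply valid_cons; auto. intros g (x & g0 & Hx & -> & ->). rewrite app_nil_r.
    intros z Hz. apply Hx. exact Hz.
  - intros c Hc. destruct (C_perm bot _ _ H c Hc) as (c' & H1 & P1). eapply Hb; eauto.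
  - intros c Hc. destruct (C_app _ _ _ _ Hc) as (g & d & Hg & Hd & ->).
    rewrite valid_cons in IHll1, IHll2; auto. specialize (IHll1 _ Hg). specialize (IHll2 _ Hd).
    rewrite dual_I in IHll2; auto.
  - apply valid_cons; auto. intros g ->. apply sub_biorth; auto.
  - apply valid_cons; auto. intros g Hg z ->. apply IHll, Hg.
  - apply valid_cons; auto. intros g Hg z [].
  - apply valid_cons; auto. intros c Hc. destruct (C_app _ _ _ _ Hc) as (g & d & Hg & Hd & ->).
    rewrite valid_cons in IHll1, IHll2; auto. apply sub_biorth; auto. exists g, d. split; [apply IHll1; auto | split; [apply IHll2; auto | reflexivity]].
  - apply valid_cons; auto. intros g Hg z (x & y & Hx & Hy & ->). rewrite <- app_assoc.
    apply IHll. exists x, (y ++ g). split; auto. split; auto. exists y, g; auto.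
  - rewrite valid_cons in IHll1, IHll2; auto. apply valid_cons; auto. intros g Hg z [Hz|Hz].
    + exact (I_orth bot Hb A g z (IHll1 g Hg) Hz).
    + exact (I_orth bot Hb B g z (IHll2 g Hg) Hz).
  - rewrite valid_cons in IHll; auto. apply valid_cons; auto. intros g Hg.
    apply (sub_biorth bot Hb (uni (I bot A) (I bot B))). left; auto.
  - rewrite valid_cons in IHll; auto. apply valid_cons; auto. intros g Hg.
    apply (sub_biorth bot Hb (uni (I bot A) (I bot B))). right; auto.
  - rewrite valid_cons in IHll; auto. apply valid_cons; auto. intros g Hg.
    generalize (oc_ctx bot Hb G g Hg). simpl. apply bio_mono. intros u [-> Hu]. split; [reflexivity | apply IHll; exact Hu].
  - rewrite valid_cons in IHll; auto. apply valid_cons; auto. intros g Hg z [-> Hz].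
    simpl. apply (I_orth bot Hb A g [] (IHll _ Hg) Hz).
  - apply valid_cons; auto. intros g Hg z [-> Hz]. simpl. apply IHll, Hg.
  - apply valid_cons; auto. intros g Hg z [-> Hz]. simpl. apply (IHll ([] ++ [] ++ g)).
    assert (H0 : orth bot (I bot (WhyNot A)) []) by (apply sub_biorth; auto).
    exists [], ([] ++ g). split; auto. split; auto. exists [], g; auto.
Qed.

Definition atom_eq_dec : forall a b : atom, {a = b} + {a <> b}.
Proof. decide equality; apply Nat.eq_dec. Defined.

Definition cnt (w : list atom) (a : atom) : nat := count_occ atom_eq_dec w a.
Definition valid_r (n : nat) (a : atom) : Prop :=
  match a with At_r m => 1 <= m <= n | _ => False end.
Definition pure n w := forall a, ~ valid_r n a -> cnt w a = 0.
Definition csof n w := map (fun k => cnt w (At_r k)) (seq 1 n).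
Definition good n M (w : list atom) : Prop :=
  exists h w', Permutation w (h :: w') /\ pure n w' /\
   ((exists i, h = At_l i /\ computes M (i, csof n w') (0, repeat 0 n)) \/
    (exists m, h = At_kappa m /\ cnt w' (At_r m) = 0)).

Lemma cnt_perm u v a : Permutation u v -> cnt u a = cnt v a.
Proof. intros H. apply (proj1 (Permutation_count_occ atom_eq_dec u v) H). Qed.

Lemma cnt_cons_eq a b : cnt (a :: b) a = S (cnt b a).
Proof. unfold cnt; simpl. destruct (atom_eq_dec a a); congruence. Qed.
Lemma cnt_cons_neq a b x : a <> x -> cnt (a :: b) x = cnt b x.
Proof. intros H; unfold cnt; simpl. destruct (atom_eq_dec a x); congruence. Qed.
Lemma cnt_app u v a : cnt (u ++ v) a = cnt u a + cnt v a.
Proof. induction u as [|x u IH]; simpl; auto. unfold cnt in *; simpl. destruct (atom_eq_dec x a); lia. Qed.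
Lemma cnt_repeat_neq a b c : a <> b -> cnt (repeat a c) b = 0.
Proof. intros H; induction c; cbn [repeat]; auto. rewrite cnt_cons_neq; auto. Qed.
Lemma cnt_repeat_eq a c : cnt (repeat a c) a = c.
Proof. induction c; cbn [repeat]; auto. rewrite cnt_cons_eq; auto. Qed.

Lemma good_perm n M : pinv (good n M).
Proof.
  intros u v Hp (h & w' & H1 & H2 & H3). exists h, w'. split; auto.
  eapply perm_trans; [apply Permutation_sym; exact Hp | exact H1].
Qed.

Lemma pure_perm n u v : Permutation u v -> pure n u -> pure n v.
Proof. intros Hp H a Ha. rewrite <- (cnt_perm _ _ _ Hp). auto. Qed.
Lemma csof_perm n u v : Permutation u v -> csof n u = csof n v.
Proof. intros Hp. unfold csof. apply map_ext. intros; apply cnt_perm; auto. Qed.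

Lemma good_inv n M h0 b : ~ valid_r n h0 -> good n M (h0 :: b) ->
  pure n b /\ ((exists i, h0 = At_l i /\ computes M (i, csof n b) (0, repeat 0 n)) \/
               (exists m, h0 = At_kappa m /\ cnt b (At_r m) = 0)).
Proof.
  intros Hv (h & w' & Hp & Hpu & Hc). destruct (atom_eq_dec h0 h) as [->|Hne].
  - apply Permutation_cons_inv in Hp. apply Permutation_sym in Hp.
    split; [eapply pure_perm; eauto|].
    destruct Hc as [(i & -> & Hc)|(m & -> & Hc)].
    + left. exists i. split; auto. rewrite (csof_perm n b w'); auto. apply Permutation_sym; auto.
    + right. exists m. split; auto. rewrite (cnt_perm b w'); auto. apply Permutation_sym; auto.
  - exfalso. assert (HI : In h0 w').
    { assert (In h0 (h :: w')) by (eapply Permutation_in; eauto; left; auto).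
      destruct H; [congruence|auto]. }
    apply (count_occ_not_In atom_eq_dec) in HI; auto.
Qed.

Lemma good_intro_l n M i b : pure n b -> computes M (i, csof n b) (0, repeat 0 n) -> good n M (At_l i :: b).
Proof. intros. exists (At_l i), b. split; auto. split; auto. left; eauto. Qed.
Lemma good_intro_k n M m b : pure n b -> cnt b (At_r m) = 0 -> good n M (At_kappa m :: b).
Proof. intros. exists (At_kappa m), b. split; auto. split; auto. right; eauto. Qed.

Lemma pure_cons_r n a b : valid_r n a -> pure n b -> pure n (a :: b).
Proof. intros Ha H x Hx. rewrite cnt_cons_neq; auto. intros ->; auto. Qed.
Lemma pure_tail n a b : pure n (a :: b) -> pure n b.
Proof. intros H x Hx. specialize (H x Hx). unfold cnt in *; simpl in H. destruct (atom_eq_dec a x); lia. Qed.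

Lemma map_upd s len b m : s <= m ->
  map (fun k => cnt (At_r m :: b) (At_r k)) (seq s len) = upd (map (fun k => cnt b (At_r k)) (seq s len)) (m - s) S.
Proof.
  revert s; induction len as [|len IH]; intros s Hs; cbn [seq map]; auto.
  destruct (Nat.eq_dec m s) as [->|Hne].
  - rewrite Nat.sub_diag. cbn [upd]. rewrite cnt_cons_eq. f_equal.
    apply map_ext_in. intros k Hk. apply in_seq in Hk. rewrite cnt_cons_neq; auto. intros E; inversion E; lia.
  - replace (m - s) with (S (m - S s)) by lia. cbn [upd]. rewrite cnt_cons_neq by congruence.
    f_equal. apply IH. lia.
Qed.

Lemma csof_cons_r n m b : 1 <= m -> csof n (At_r m :: b) = upd (csof n b) (m - 1) S.
Proof. intros. unfold csof. apply map_upd; auto. Qed.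

Lemma ctr_csof n m b : 1 <= m <= n -> ctr (csof n b) m = cnt b (At_r m).
Proof.
  intros Hm. unfold ctr, csof.
  rewrite (nth_indep (map (fun k => cnt b (At_r k)) (seq 1 n)) 0 ((fun k => cnt b (At_r k)) 0)) by (rewrite length_map, length_seq; lia).
  change (cnt b (At_r 0)) with ((fun k => cnt b (At_r k)) 0). rewrite map_nth, seq_nth by lia. f_equal. f_equal. lia.
Qed.

Lemma upd_S_pred cs p : upd (upd cs p S) p pred = cs.
Proof. revert p; induction cs; destruct p; simpl; f_equal; auto. Qed.

Lemma csof_nil n : csof n [] = repeat 0 n.
Proof. unfold csof. generalize 1. induction n; intros s; simpl; f_equal; auto. Qed.

Lemma computes_zero n M cs : machine_wf n M -> computes M (0, cs) (0, repeat 0 n) -> cs = repeat 0 n.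
Proof.
  intros Hwf H. apply clos_rt_rt1n in H. inversion H as [|y z w Hs Hr]; subst; auto.
  exfalso. unfold machine_wf in Hwf. rewrite Forall_forall in Hwf.
    inversion w; subst; match goal with H : In ?I M |- _ => apply Hwf in H; simpl in H end; lia.
Qed.

Lemma wf_in n M I : machine_wf n M -> In I M -> instr_wf n I.
Proof. intros Hwf HI. unfold machine_wf in Hwf. rewrite Forall_forall in Hwf. auto. Qed.

Lemma nvl n i : ~ valid_r n (At_l i). Proof. simpl; auto. Qed.
Lemma nvk n i : ~ valid_r n (At_kappa i). Proof. simpl; auto. Qed.

Lemma step_inc n M i m j b : machine_wf n M -> In (I_inc i m j) M ->
  good n M (At_l j :: At_r m :: b) -> good n M (At_l i :: b).
Proof.
  intros Hwf HI Hg. pose proof (wf_in _ _ _ Hwf HI) as W; simpl in W.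
  destruct (good_inv _ _ _ _ (nvl n j) Hg) as [Hp [(i' & E & Hc)|(m' & E & _)]]; [|discriminate].
  inversion E; subst i'. apply good_intro_l; [eapply pure_tail; eauto|].
  eapply rt_trans; [apply rt_step; eapply st_inc; eauto|]. rewrite <- csof_cons_r by lia. exact Hc.
Qed.

Lemma step_dec n M i m j b : machine_wf n M -> In (I_dec i m j) M ->
  good n M (At_l j :: b) -> good n M (At_l i :: At_r m :: b).
Proof.
  intros Hwf HI Hg. pose proof (wf_in _ _ _ Hwf HI) as W; simpl in W.
  destruct (good_inv _ _ _ _ (nvl n j) Hg) as [Hp [(i' & E & Hc)|(m' & E & _)]]; [|discriminate].
  inversion E; subst i'. apply good_intro_l; [apply pure_cons_r; simpl; auto; lia|].
  assert (Hct : ctr (csof n (At_r m :: b)) m >= 1) by (rewrite ctr_csof by lia; rewrite cnt_cons_eq; lia).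
  rewrite csof_cons_r in * by lia.
  eapply rt_trans; [apply rt_step; eapply st_dec; eauto|]. rewrite upd_S_pred. exact Hc.
Qed.

Lemma step_jpos n M i m j b : machine_wf n M -> In (I_jpos i m j) M ->
  good n M (At_l j :: At_r m :: b) -> good n M (At_l i :: At_r m :: b).
Proof.
  intros Hwf HI Hg. pose proof (wf_in _ _ _ Hwf HI) as W; simpl in W.
  destruct (good_inv _ _ _ _ (nvl n j) Hg) as [Hp [(i' & E & Hc)|(m' & E & _)]]; [|discriminate].
  inversion E; subst i'. apply good_intro_l; auto.
  assert (Hct : ctr (csof n (At_r m :: b)) m > 0) by (rewrite ctr_csof by lia; rewrite cnt_cons_eq; lia).
  eapply rt_trans; [apply rt_step; eapply st_jpos; eauto|]. exact Hc.
Qed.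

Lemma step_jzero n M i m j b : machine_wf n M -> In (I_jzero i m j) M ->
  good n M (At_l j :: b) -> good n M (At_kappa m :: b) -> good n M (At_l i :: b).
Proof.
  intros Hwf HI Hg Hk. pose proof (wf_in _ _ _ Hwf HI) as W; simpl in W.
  destruct (good_inv _ _ _ _ (nvl n j) Hg) as [Hp [(i' & E & Hc)|(m' & E & _)]]; [|discriminate].
  inversion E; subst i'.
  destruct (good_inv _ _ _ _ (nvk n m) Hk) as [_ [(i' & E' & _)|(m' & E' & Hz)]]; [discriminate|].
  inversion E'; subst m'.
  apply good_intro_l; auto.
  eapply rt_trans; [apply rt_step; eapply st_jzero; eauto|]. 2: exact Hc.
  rewrite ctr_csof by lia. auto.
Qed.

Lemma step_k0 n M m b : machine_wf n M -> 1 <= m <= n -> good n M (At_l 0 :: b) -> good n M (At_kappa m :: b).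
Proof.
  intros Hwf Hm Hg.
  destruct (good_inv _ _ _ _ (nvl n 0) Hg) as [Hp [(i' & E & Hc)|(m' & E & _)]]; [|discriminate].
  inversion E; subst i'. apply (computes_zero n M) in Hc; auto.
  apply good_intro_k; auto. rewrite <- (ctr_csof n m b) by lia. rewrite Hc. unfold ctr. apply nth_repeat.
Qed.

Lemma step_kr n M m i b : 1 <= i <= n -> i <> m -> good n M (At_kappa m :: b) -> good n M (At_kappa m :: At_r i :: b).
Proof.
  intros Hi Hne Hk.
  destruct (good_inv _ _ _ _ (nvk n m) Hk) as [Hp [(i' & E' & _)|(m' & E' & Hz)]]; [discriminate|].
  inversion E'; subst m'. apply good_intro_k; [apply pure_cons_r; simpl; auto|].
  rewrite cnt_cons_neq; auto. congruence.
Qed.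

Lemma biorth_elim bot (Hb : pinv bot) S a b : orth bot (orth bot S) a -> (forall s, S s -> bot (s ++ b)) -> bot (a ++ b).
Proof. intros Ha H. apply (Hb (b ++ a)); [apply Permutation_app_comm|]. apply Ha. exact H. Qed.

Lemma elim_atom bot (Hb : pinv bot) c a b : I bot (Pos c) a -> bot (c :: b) -> bot (a ++ b).
Proof. intros Ha Hc. apply (biorth_elim bot Hb _ _ _ Ha). intros s ->. exact Hc. Qed.

Lemma orth_atom bot (Hb : pinv bot) c b : orth bot (I bot (Pos c)) b -> bot (c :: b).
Proof. intros H. apply (H [c]). apply sub_biorth; auto. Qed.

Lemma orth_tensor bot (Hb : pinv bot) c d b : orth bot (I bot (Tensor (Pos c) (Pos d))) b -> bot (c :: d :: b).
Proof.
  intros H. apply (H [c; d]). apply (sub_biorth bot Hb (prd (I bot (Pos c)) (I bot (Pos d)))).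
  exists [c], [d]. split; [apply sub_biorth; auto|split; [apply sub_biorth; auto|reflexivity]].
Qed.

Lemma orth_plus bot (Hb : pinv bot) c d b : orth bot (I bot (Plus (Pos c) (Pos d))) b -> bot (c :: b) /\ bot (d :: b).
Proof.
  intros H. split.
  - apply (H [c]). apply (sub_biorth bot Hb (uni (I bot (Pos c)) (I bot (Pos d)))). left. apply sub_biorth; auto.
  - apply (H [d]). apply (sub_biorth bot Hb (uni (I bot (Pos c)) (I bot (Pos d)))). right. apply sub_biorth; auto.
Qed.

Lemma elim_tensor bot (Hb : pinv bot) c d a b : I bot (Tensor (Pos c) (Pos d)) a -> bot (c :: d :: b) -> bot (a ++ b).
Proof.
  intros Ha Hc. apply (biorth_elim bot Hb _ _ _ Ha). intros s (x & y & Hx & Hy & ->).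
  rewrite <- app_assoc. apply (elim_atom bot Hb c); auto.
  apply (Hb (y ++ c :: b)); [apply Permutation_sym, Permutation_middle|].
  apply (elim_atom bot Hb d); auto. apply (Hb (c :: d :: b)); [apply perm_swap|auto].
Qed.

Lemma lolli_intro bot (Hb : pinv bot) A B : (forall a b, I bot A a -> orth bot (I bot B) b -> bot (a ++ b)) -> I bot (lolli A B) [].
Proof.
  intros H. unfold lolli. simpl. rewrite (dual_I bot Hb), (I_fact bot Hb).
  intros z (x & y & Hx & Hy & ->). rewrite app_nil_r. auto.
Qed.

Lemma phi_sound n M I0 : machine_wf n M -> In I0 M -> I (good n M) (phi I0) [].
Proof.
  intros Hwf HI. pose proof (good_perm n M) as Hb.
  destruct I0 as [i m j|i m j|i m j|i m j]; simpl phi; apply lolli_intro; auto; intros a b Ha Hb'.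
  - apply (elim_atom _ Hb _ _ _ Ha). apply orth_tensor in Hb'; auto. eapply step_inc; eauto.
  - apply (elim_tensor _ Hb _ _ _ _ Ha). apply orth_atom in Hb'; auto. eapply step_dec; eauto.
  - apply (elim_tensor _ Hb _ _ _ _ Ha). apply orth_tensor in Hb'; auto. eapply step_jpos; eauto.
  - apply (elim_atom _ Hb _ _ _ Ha). apply orth_plus in Hb' as [H1 H2]; auto. eapply step_jzero; eauto.
Qed.

Lemma K_sound n M A : machine_wf n M -> In A (K n) -> I (good n M) A [].
Proof.
  intros Hwf HA. pose proof (good_perm n M) as Hb. unfold K in HA.
  apply in_flat_map in HA as (m & Hm & HA). apply in_seq in Hm.
  destruct HA as [<-|HA].
  - apply lolli_intro; auto. intros a b Ha Hb'. apply (elim_atom _ Hb _ _ _ Ha).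
    apply orth_atom in Hb'; auto. eapply step_k0; eauto; lia.
  - apply in_map_iff in HA as (i & <- & Hi). apply filter_In in Hi as [Hi Hne].
    apply in_seq in Hi. apply Bool.negb_true_iff, Nat.eqb_neq in Hne.
    apply lolli_intro; auto. intros a b Ha Hb'. apply (elim_tensor _ Hb _ _ _ _ Ha).
    apply orth_atom in Hb'; auto. apply step_kr; auto; lia.
Qed.

Fixpoint la (s : nat) (ks : list nat) : list atom :=
  match ks with [] => [] | c :: ks' => repeat (At_r s) c ++ la (S s) ks' end.

Lemma la_eq s ks : flat_map (fun mk => repeat (r (fst mk)) (snd mk)) (combine (seq s (length ks)) ks)
  = map Pos (la s ks).
Proof.
  revert s; induction ks as [|c ks IH]; intros s; simpl; auto.
  rewrite map_app, map_repeat, IH. reflexivity.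
Qed.

Lemma la_low ks s k : k < s -> cnt (la s ks) (At_r k) = 0.
Proof.
  revert s; induction ks as [|c ks IH]; intros s Hk; simpl; auto.
  rewrite cnt_app, cnt_repeat_neq, IH; auto. intros E; inversion E; lia.
Qed.

Lemma la_cs ks s : map (fun k => cnt (la s ks) (At_r k)) (seq s (length ks)) = ks.
Proof.
  revert s; induction ks as [|c ks IH]; intros s; simpl; auto. f_equal.
  - rewrite cnt_app, cnt_repeat_eq, la_low; lia.
  - rewrite <- (IH (S s)) at 2. apply map_ext_in. intros k Hk. apply in_seq in Hk.
    rewrite cnt_app, cnt_repeat_neq; auto. intros E; inversion E; lia.
Qed.

Lemma fold_tensor bot (Hb : pinv bot) L A x : I bot A x -> I bot (fold_left Tensor (map Pos L) A) (x ++ L).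
Proof.
  revert A x; induction L as [|a L IH]; intros A x Hx; simpl.
  - rewrite app_nil_r; auto.
  - replace (x ++ a :: L) with ((x ++ [a]) ++ L) by (rewrite <- app_assoc; reflexivity).
    apply IH. apply (sub_biorth bot Hb (prd (I bot A) (I bot (Pos a)))).
    exists x, [a]. split; auto. split; [apply sub_biorth; auto|reflexivity].
Qed.

Lemma C_nil bot G : (forall A, In A G -> orth bot (I bot A) []) -> C bot G [].
Proof.
  induction G as [|A G IH]; intros H; simpl; auto. exists [], []. split; [apply H; left; auto|].
  split; auto. apply IH. intros; apply H; right; auto.
Qed.

Theorem theorem3 (n : nat) (M : list instr) (ks : list nat) :
  machine_wf n M ->
  length ks = n ->
  ll_sequent (initial_formula ks :: map OfCourse (Phi M) ++ map OfCourse (K n))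
             (l 0 :: nil) ->
  computes M (1, ks) (0, repeat 0 n).
Proof.
  intros Hwf Hlen Hll. unfold ll_sequent in Hll.
  pose proof (good_perm n M) as Hb.
  apply (soundness (good n M) Hb) in Hll.
  set (w0 := At_l 1 :: la 1 ks).
  assert (Hg : good n M (w0 ++ [])).
  { apply Hll. exists w0, []. split; [|split; [|reflexivity]].
    - rewrite (dual_I _ Hb), (I_fact _ Hb). unfold initial_formula. rewrite la_eq.
      apply (fold_tensor _ Hb (la 1 ks) (l 1) [At_l 1]). apply sub_biorth; auto.
    - apply C_nil. intros A HA. apply in_app_or in HA as [HA|HA].
      + apply in_map_iff in HA as (B & <- & HB). apply in_app_or in HB as [HB|HB];
        apply in_map_iff in HB as (phi0 & <- & Hphi); simpl dual;
        apply (sub_biorth _ Hb (fun x => x = [] /\ orth (good n M) (I (good n M) (dual phi0)) x));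
        (split; [reflexivity|]); rewrite (dual_I _ Hb), (I_fact _ Hb).
        * unfold Phi in Hphi. apply in_map_iff in Hphi as (I0 & <- & HI). apply phi_sound; auto.
        * apply K_sound; auto.
      + destruct HA as [<-|[]]. intros x Hx. apply (elim_atom _ Hb _ _ _ Hx).
        apply good_intro_l; [intros a _; reflexivity|]. rewrite csof_nil. apply rt_refl. }
  rewrite app_nil_r in Hg. unfold w0 in Hg.
  destruct (good_inv _ _ _ _ (nvl n 1) Hg) as [_ [(i' & E & Hc)|(m' & E & _)]]; [|discriminate].
  inversion E; subst i'. unfold csof in Hc. subst n. rewrite la_cs in Hc. exact Hc.
Qed.
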